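(* Let $G$ be a finite simple undirected graph, $T$ a spanning forest of $G$, and let $G'=G+e$ be obtained by inserting a new edge $e$ between two distinct non-adjacent vertices; let $T'=T$ if the endpoints of $e$ lie in the same tree of $T$, and $T'=T+e$ otherwise (so $T'$ is a spanning forest of $G'$). Let $(u,v)$ be an edge of $T$, and let $\mathrm{rep}(u,v)$ and $\mathrm{rep}'(u,v)$ denote the number of replacement edges of $(u,v)$ with respect to $(G,T)$ and $(G',T')$, respectively. Then $u$ and $v$ lie in different 2-edge-connected components of $G$ but in the same 2-edge-connected component of $G'$ if and only if $\mathrm{rep}(u,v)=0$ and $\mathrm{rep}'(u,v)=1$.
   Context: A spanning forest of a graph $H$ is an acyclic subgraph on all vertices of $H$ whose components have the same vertex sets as the components of $H$. Given $H$ and a spanning forest $F$, a replacement edge for an edge $f$ of $F$ is an edge $(x,y)\in E(H)\setminus E(F)$ with $x,y$ in the same tree of $F$ such that the unique path in $F$ between $x$ and $y$ contains $f$. Two vertices are 2-edge connected if there exist at least two edge-disjoint paths between them; the 2-edge-connected components are the equivalence classes of this relation. *)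

(* Defs.v *)
From mathcomp Require Import all_boot.
From mathcomp Require Import boolp.
Set Implicit Arguments. Unset Strict Implicit. Unset Printing Implicit Defensive.

Section Graphs.
Variable V : finType.

Definition simple_graph (G : rel V) := symmetric G /\ irreflexive G.

Definition uses_edge (x : V) (p : seq V) (a b : V) : bool :=
  ((a, b) \in zip (x :: p) p) || ((b, a) \in zip (x :: p) p).

Definition acyclic (F : rel V) := forall c : seq V, 3 <= size c -> ~~ ucycleb F c.

Definition spanning_forest (G F : rel V) :=
  [/\ symmetric F, (forall x y, F x y -> G x y), acyclic F
    & forall x y, connect F x y = connect G x y].

Definition forest_path_contains (F : rel V) (x y a b : V) :=
  exists p : seq V, [/\ path F x p, last x p = y, uniq (x :: p) & uses_edge x p a b].

Definition replacement_edge (H F : rel V) (a b x y : V) :=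
  [/\ H x y, ~~ F x y, connect F x y & forest_path_contains F x y a b].

Definition rep (H F : rel V) (a b : V) : nat :=
  #|[set E : {set V} | `[< exists x y, E = [set x; y] /\ replacement_edge H F a b x y >]]|.

Definition two_edge_connected (H : rel V) (u v : V) :=
  exists p q : seq V,
    [/\ path H u p, last u p = v & uniq (u :: p)] /\
    [/\ path H u q, last u q = v & uniq (u :: q)] /\
    (forall a b, ~~ (uses_edge u p a b && uses_edge u q a b)).

Definition add_edge (G : rel V) (s t : V) : rel V :=
  fun x y => [|| G x y, (x == s) && (y == t) | (x == t) && (y == s)].

Definition forest_update (T : rel V) (s t : V) : rel V :=
  if connect T s t then T else add_edge T s t.

End Graphs.

(* Main.v *)
Require Import Defs.
From mathcomp Require Import all_boot.
From mathcomp Require Import boolp.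
Set Implicit Arguments. Unset Strict Implicit. Unset Printing Implicit Defensive.

Section Aux.
Variable V : finType.
Implicit Types (R H F T : rel V) (x y u v a b : V) (p : seq V).

Definition del R u v : rel V :=
  fun x y => R x y && ~~ (((x == u) && (y == v)) || ((x == v) && (y == u))).

Lemma uses_edge_nil x a b : uses_edge x [::] a b = false.
Proof. by []. Qed.

Lemma uses_edge_cons x z p a b : uses_edge x (z :: p) a b =
  [|| (x == a) && (z == b), (x == b) && (z == a) | uses_edge z p a b].
Proof.
rewrite /uses_edge /= !in_cons !xpair_eqE ![a == _]eq_sym ![b == _]eq_sym.
by rewrite -!orbA; congr (_ || _); rewrite orbCA.
Qed.

Lemma uses_edge_sym x p a b : uses_edge x p a b = uses_edge x p b a.
Proof. by rewrite /uses_edge orbC. Qed.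

Lemma uses_edge_mem x p a b : uses_edge x p a b -> a \in x :: p.
Proof.
elim: p x => [|z p IH] x //.
rewrite uses_edge_cons => /or3P [/andP[/eqP-> _]|/andP[_ /eqP->]|/IH h].
- by rewrite inE eqxx.
- by rewrite !inE eqxx orbT.
- by rewrite inE h orbT.
Qed.

Lemma path_del R u v x p : path (del R u v) x p = path R x p && ~~ uses_edge x p u v.
Proof.
elim: p x => [|z p IH] x //=. rewrite IH uses_edge_cons /del.
by case: (R x z); case: (path R z p); case: (x == u); case: (z == v);
  case: (x == v); case: (z == u); case: (uses_edge z p u v).
Qed.

Lemma del_sub R u v x y : del R u v x y -> R x y.
Proof. by case/andP. Qed.

Lemma del_mono R R' u v : (forall a b, R a b -> R' a b) ->
  forall x y, del R u v x y -> del R' u v x y.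
Proof. by move=> h x y /andP[/h r n]; rewrite /del r n. Qed.

Lemma del_sym R u v : symmetric R -> symmetric (del R u v).
Proof.
move=> Rs x y; rewrite /del Rs.
by case: (R y x); case: (x == u); case: (y == v); case: (x == v); case: (y == u).
Qed.

Lemma add_edge_sym R s t : symmetric R -> symmetric (add_edge R s t).
Proof.
move=> Rs x y; rewrite /add_edge Rs (andbC (y == s)) (andbC (y == t)).
by congr (_ || _); rewrite orbC.
Qed.

Lemma connect_subrel R R' : (forall x y, R x y -> R' x y) ->
  forall x y, connect R x y -> connect R' x y.
Proof.
move=> h x y /connectP[p pp ->]; apply/connectP; exists p => //.
exact: sub_path h _ _ pp.
Qed.

Lemma connect_cross R (P : pred V) x p : path R x p -> P x -> ~~ P (last x p) ->
  exists a b, [/\ R a b, P a & ~~ P b].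
Proof.
elim: p x => [|z p IH] x /=; first by move=> _ ->.
move=> /andP[Rxz pz] Px Pl. case Pz: (P z).
- exact: IH pz Pz Pl.
- by exists x, z; split; rewrite ?Pz.
Qed.

Lemma union_connect R R' a b x y :
  (forall w w', R' w w' -> [|| R w w', (w == a) && (w' == b) | (w == b) && (w' == a)]) ->
  connect R' x y ->
  connect R x y \/ (connect R x a /\ connect R b y) \/ (connect R x b /\ connect R a y).
Proof.
move=> hR /connectP [p pp ->].
have step : forall w w',
  (connect R x w \/ (connect R x a /\ connect R b w) \/ (connect R x b /\ connect R a w)) ->
  R' w w' ->
  (connect R x w' \/ (connect R x a /\ connect R b w') \/ (connect R x b /\ connect R a w')).
  move=> w w' Pw /hR /or3P[Rw | /andP[/eqP ew /eqP ew'] | /andP[/eqP ew /eqP ew']].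
  - have c' z : connect R z w -> connect R z w' := fun c => connect_trans c (connect1 Rw).
    case: Pw => [c|[[c1 c2]|[c1 c2]]];
      [left; exact: c' | right; left; split => //; exact: c' | right; right; split => //; exact: c'].
  - subst w w'. case: Pw => [c|[[c1 _]|[c1 _]]].
    + by right; left; split.
    + by right; left; split.
    + by left.
  - subst w w'. case: Pw => [c|[[c1 _]|[c1 _]]].
    + by right; right; split.
    + by left.
    + by right; right; split.
have : forall w,
  (connect R x w \/ (connect R x a /\ connect R b w) \/ (connect R x b /\ connect R a w)) ->
  path R' w p ->
  let w2 := last w p in
  (connect R x w2 \/ (connect R x a /\ connect R b w2) \/ (connect R x b /\ connect R a w2)).
  elim: p {pp} => [|z q IH] w Pw //= /andP[h1 h2].
  exact: IH (step _ _ Pw h1) h2.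
by move/(_ x (or_introl (connect0 _ _)) pp).
Qed.

Lemma claim R u v x p : uniq (x :: p) -> path R x p -> uses_edge x p u v ->
  (connect (del R u v) x u && connect (del R u v) v (last x p)) ||
  (connect (del R u v) x v && connect (del R u v) u (last x p)).
Proof.
elim: p x => [|z p IH] x; first by rewrite uses_edge_nil.
move=> /= /andP[xn uq] /andP[Rxz pz] ue.
case: (boolP ((x == u) && (z == v))) => [/andP[/eqP ex /eqP ez]| n1].
  apply/orP; left; apply/andP; split; first by rewrite ex connect0.
  apply/connectP; exists p => //; rewrite -ez //.
  rewrite path_del pz /=; apply/negP => /uses_edge_mem.
  by rewrite -ex (negbTE xn).
case: (boolP ((x == v) && (z == u))) => [/andP[/eqP ex /eqP ez]| n2].
  apply/orP; right; apply/andP; split; first by rewrite ex connect0.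
  apply/connectP; exists p => //; rewrite -ez //.
  rewrite path_del pz /= uses_edge_sym; apply/negP => /uses_edge_mem.
  by rewrite -ex (negbTE xn).
rewrite uses_edge_cons (negbTE n1) (negbTE n2) /= in ue.
have dxz : del R u v x z by rewrite /del Rxz (negbTE n1) (negbTE n2).
move/(_ z uq pz ue): IH => /orP[/andP[c1 c2]|/andP[c1 c2]]; apply/orP; [left|right];
  rewrite c2 andbT; exact: connect_trans (connect1 dxz) c1.
Qed.

Lemma acyc_del T u v : symmetric T -> acyclic T -> T u v -> u != v ->
  ~~ connect (del T u v) u v.
Proof.
move=> Ts Ta Tuv nuv; apply/negP => /connectP[p pp lp].
case/shortenP: pp lp => q pq uq _ lq.
case: q pq uq lq => [|w q] pq uq lq.
  by rewrite lq eqxx in nuv.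
case: q pq uq lq => [|w2 q] pq uq lq.
  move: lq pq => /= lq; rewrite -lq /= /del !eqxx /=.
  by rewrite andbF.
have := Ta (u :: w :: w2 :: q) isT; apply/negP; rewrite negbK.
rewrite /ucycleb uq andbT /= rcons_path.
rewrite /= in lq; rewrite -lq (Ts v u) Tuv andbT.
by move: pq; rewrite path_del => /andP[h _]; exact: h.
Qed.

Lemma tec H u v : u != v -> H u v ->
  two_edge_connected H u v <-> connect (del H u v) u v.
Proof.
move=> nuv Huv; split.
- case=> p [q [[pp lp up] [[pq lq uq] dis]]].
  have := dis u v; case/nandP => [np|nq]; apply/connectP.
  + by exists p; [rewrite path_del pp np | rewrite lp].
  + by exists q; [rewrite path_del pq nq | rewrite lq].
- move/connectP=> [p pp lp]. case/shortenP: pp lp => q pq uq _ lq.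
  move: pq; rewrite path_del => /andP[pq nq].
  exists [:: v], q. split; [|split].
  + by split => //=; rewrite ?Huv // inE nuv.
  + by split => //; rewrite lq.
  + move=> a b; rewrite uses_edge_cons.
    case: (boolP ((u == a) && (v == b))) => [/andP[/eqP<- /eqP<-]| n1].
      by rewrite /= (negbTE nq).
    case: (boolP ((u == b) && (v == a))) => [/andP[/eqP<- /eqP<-]| n2].
      by rewrite orbT /= uses_edge_sym (negbTE nq).
    by rewrite uses_edge_nil.
Qed.

Lemma RE2EC H F u v x y : symmetric H -> (forall a b, F a b -> H a b) -> symmetric F ->
  F u v -> replacement_edge H F u v x y -> connect (del H u v) u v.
Proof.
move=> Hs FH Fs Fuv [Hxy nFxy cxy [p [pp lp up ue]]].
have sub := connect_subrel (fun a b (h : del F u v a b) => del_mono FH h).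
have dxy : del H u v x y.
  rewrite /del Hxy /=; apply/negP => /orP[/andP[/eqP ex /eqP ey]|/andP[/eqP ex /eqP ey]];
  by move: nFxy; rewrite ex ey ?Fuv // Fs Fuv.
have dS : symmetric (del H u v) := del_sym u v Hs.
have dyx : del H u v y x by rewrite dS.
move: (claim up pp ue); rewrite lp => /orP[/andP[c1 c2]|/andP[c1 c2]].
- apply: (connect_trans _ (_ : connect _ y v)); last by rewrite (sym_connect_sym dS); exact: sub c2.
  apply: (connect_trans _ (connect1 dxy)).
  rewrite (sym_connect_sym dS); exact: sub c1.
- apply: (connect_trans _ (sub _ _ c1)). apply: (connect_trans (sub _ _ c2) (connect1 dyx)).
Qed.

Lemma cross_of_D H T u v : ~~ connect (del T u v) u v -> connect (del H u v) u v ->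
  exists a b, [/\ H a b, ~~ T a b, connect (del T u v) u a & ~~ connect (del T u v) u b].
Proof.
move=> nC /connectP[p pp lp].
have := connect_cross (P := connect (del T u v) u) pp (connect0 _ _).
rewrite -lp => /(_ nC) [a [b [dab ca ncb]]].
exists a, b. move: dab => /andP[Hab ex]. split => //.
apply/negP => Tab; move/negP: ncb; apply.
apply: connect_trans ca (connect1 _). by rewrite /del Tab ex.
Qed.

Lemma R2 H T u v x y : H x y -> ~~ T x y -> connect T x y ->
  connect (del T u v) u x -> ~~ connect (del T u v) u y -> replacement_edge H T u v x y.
Proof.
move=> Hxy nT cT cx ncy; split => //.
case/connectP: cT => p pp lp. case/shortenP: pp lp => q pq uq _ lq.
subst y; exists q; split => //.
case ue: (uses_edge x q u v) => //.
exfalso; move/negP: ncy; apply. apply: connect_trans cx _.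
by apply/connectP; exists q; [rewrite path_del pq ue | done].
Qed.

Lemma rep_pos H F u v x y : replacement_edge H F u v x y -> 0 < rep H F u v.
Proof.
move=> r; rewrite /rep card_gt0; apply/set0Pn; exists [set x; y].
by rewrite inE; apply/asboolP; exists x, y.
Qed.

Lemma rep_ex H F u v : 0 < rep H F u v -> exists x y, replacement_edge H F u v x y.
Proof.
rewrite /rep card_gt0 => /set0Pn[E]; rewrite inE => /asboolP[x [y [_ r]]].
by exists x, y.
Qed.

End Aux.

Theorem lemma15 (V : finType) (G T : rel V) (s t : V) :
  simple_graph G -> spanning_forest G T ->
  s != t -> ~~ G s t ->
  forall u v : V, T u v ->
  ((~ two_edge_connected G u v /\ two_edge_connected (add_edge G s t) u v)
   <-> (rep G T u v = 0 /\ rep (add_edge G s t) (forest_update T s t) u v = 1)).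
Proof.
move=> [Gs Gi] [Ts TG Ta Tc] nst nGst u v Tuv.
have Guv : G u v := TG _ _ Tuv.
have nuv : u != v by apply/eqP => e; move: Guv; rewrite e Gi.
set G' := add_edge G s t.
have GG' : forall x y, G x y -> G' x y by move=> x y h; rewrite /G' /add_edge h.
have G's : symmetric G' := add_edge_sym s t Gs.
have G'uv : G' u v := GG' _ _ Guv.
have nC := acyc_del Ts Ta Tuv nuv.
have e1 := tec nuv Guv.
have e2 := tec nuv G'uv.
have DG_rep : connect (del G u v) u v <-> 0 < rep G T u v.
  split.
  - move/(cross_of_D nC) => [a [b [Gab nTab ca ncb]]].
    apply: (@rep_pos _ _ _ _ _ a b); apply: R2 => //. by rewrite Tc connect1.
  - move/rep_ex => [x [y r]]. exact: RE2EC Gs TG Ts Tuv r.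
rewrite /forest_update. case: (boolP (connect T s t)) => hc.
- split.
  + move=> [n1 d2].
    have nDG : ~ connect (del G u v) u v by move=> h; apply: n1; apply/e1.
    have nrep : forall x y, ~ replacement_edge G T u v x y.
      move=> x y r; apply: nDG; apply/DG_rep; exact: rep_pos r.
    have r0 : rep G T u v = 0.
      by case: (posnP (rep G T u v)) => // /rep_ex[x [y r]]; case: (nrep x y).
    split => //.
    have [a [b [G'ab nTab ca ncb]]] := cross_of_D nC (e2.1 d2).
    have nGab : ~~ G a b.
      apply/negP => Gab; apply: (nrep a b); apply: R2 => //; by rewrite Tc connect1.
    have eab : [set a; b] = [set s; t].
      move: G'ab; rewrite /G' /add_edge (negbTE nGab) /=
        => /orP[/andP[/eqP-> /eqP->]|/andP[/eqP-> /eqP->]] //; exact: setUC.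
    have cab : connect T a b.
      move: G'ab; rewrite /G' /add_edge (negbTE nGab) /=
        => /orP[/andP[/eqP-> /eqP->]|/andP[/eqP-> /eqP->]] //; by rewrite sym_connect_sym.
    have ra := R2 G'ab nTab cab ca ncb.
    rewrite /rep -(cards1 [set s; t]). apply: eq_card => E. rewrite !inE.
    apply/asboolP/eqP.
    * move=> [x [y [-> [G'xy nTxy cxy fp]]]].
      have nGxy : ~~ G x y.
        by apply/negP => Gxy; exact: (nrep x y (And4 Gxy nTxy cxy fp)).
      move: G'xy; rewrite /G' /add_edge (negbTE nGxy) /=
        => /orP[/andP[/eqP-> /eqP->]|/andP[/eqP-> /eqP->]] //; exact: setUC.
    * by move=> ->; exists a, b; split; [rewrite eab | exact: ra].
  + move=> [r0 r1]. split.
    * by move=> h; move/e1/DG_rep: h; rewrite r0.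
    * apply/e2. have [x [y r]] := @rep_ex _ G' T u v ltac:(by rewrite r1).
      apply: (RE2EC G's _ Ts Tuv r) => a b h; exact: GG' (TG _ _ h).
- have DB : connect (del G' u v) u v -> connect (del G u v) u v.
    move=> h.
    have hyp : forall w w', del G' u v w w' ->
        [|| del G u v w w', (w == s) && (w' == t) | (w == t) && (w' == s)].
      move=> w w' /andP[]; rewrite /G' /add_edge => /orP[Gww|/orP[e|e]] ex.
      + by rewrite /del Gww ex.
      + by rewrite e orbT.
      + by rewrite e !orbT.
    have sub := connect_subrel (fun a b (h : del G u v a b) => del_sub h).
    have sGs := sym_connect_sym Gs.
    case: (union_connect hyp h) => [//|[[c1 c2]|[c1 c2]]]; exfalso; move/negP: hc; apply;
      rewrite Tc.
    + apply: (connect_trans (y:=u)); first by rewrite sGs; exact: sub c1.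
      apply: connect_trans (connect1 Guv) _. rewrite sGs; exact: sub c2.
    + apply: (connect_trans (y:=v)); first exact: sub c2.
      apply: (connect_trans (y:=u)); first by apply: connect1; rewrite Gs.
      exact: sub c1.
  split.
  + move=> [n1 d2]. exfalso. apply: n1; apply/e1; apply: DB; exact/e2.
  + move=> [r0 r1]. exfalso.
    have [x [y r]] := @rep_ex _ G' (add_edge T s t) u v ltac:(by rewrite r1).
    have := RE2EC G's _ (add_edge_sym s t Ts) _ r.
    move=> /(_ _) /(_ _) h.
    have : 0 < rep G T u v.
      apply/DG_rep; apply: DB; apply: h.
      * by move=> a b; rewrite /G' /add_edge => /orP[/TG ->|->]; rewrite ?orbT.
      * by rewrite /add_edge Tuv.
    by rewrite r0.
Qed.
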